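(* Let $p\ge3$ be a prime which is not a Wieferich prime. Then $P(p^k,n)=p^{k-1}P(p,n)$ for all positive integers $k$ and $n$.
   Context: For positive integers $m,n$, let $\mathbf{Z}_m$ be the integers modulo $m$ and $T:\mathbf{Z}_m^n\to\mathbf{Z}_m^n$, $T(a_0,\dots,a_{n-1})=(a_0+a_1,a_1+a_2,\dots,a_{n-1}+a_0)$. For $\mathbf{a}\in\mathbf{Z}_m^n$ the cycle length of $(T^k\mathbf{a})_{k\ge0}$ is the smallest positive integer $P$ such that there is $N$ with $T^{k+P}\mathbf{a}=T^k\mathbf{a}$ for all $k\ge N$. $P(m,n)$ denotes the maximum of these cycle lengths over all $\mathbf{a}\in\mathbf{Z}_m^n$. A prime $p$ is a Wieferich prime if $2^{p-1}\equiv1\pmod{p^2}$. *)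

(* Defs.v *)
From mathcomp Require Import all_boot.
Set Implicit Arguments. Unset Strict Implicit. Unset Printing Implicit Defensive.

(* Vectors of Z_m^n are modelled as finite functions 'I_n -> 'I_m (entries are
   residues 0..m-1); for m >= 1 this is exactly Z_m^n. *)
Definition vecZ (m n : nat) := {ffun 'I_n -> 'I_m}.

Definition nexti (n : nat) (i : 'I_n) : 'I_n := ordS i.

Definition Tmap (m n : nat) (a : vecZ m n) : vecZ m n :=
  match m as m0 return vecZ m0 n -> vecZ m0 n with
  | 0 => fun b => b
  | m'.+1 => fun b => [ffun i => Ordinal (ltn_pmod (b i + b (nexti i)) (ltn0Sn m'))]
  end a.

Definition is_eventual_period (m n : nat) (a : vecZ m n) (P : nat) : Prop :=
  exists N, forall k, N <= k -> iter (k + P) (@Tmap m n) a = iter k (@Tmap m n) a.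

Definition is_cycle_length (m n : nat) (a : vecZ m n) (P : nat) : Prop :=
  0 < P /\ is_eventual_period a P /\
  (forall Q, 0 < Q -> is_eventual_period a Q -> P <= Q).

Definition is_Pmax (m n Q : nat) : Prop :=
  (exists a : vecZ m n, is_cycle_length a Q) /\
  (forall (a : vecZ m n) (P : nat), is_cycle_length a P -> P <= Q).

Definition wieferich (p : nat) : Prop := prime p /\ 2 ^ p.-1 = 1 %[mod p ^ 2].

(* Main.v *)
Require Import Defs.
From mathcomp Require Import all_boot all_algebra.
From mathcomp Require Import cyclic.
From mathcomp Require Import ring zify.
From Stdlib Require Import Classical.
Set Implicit Arguments. Unset Strict Implicit. Unset Printing Implicit Defensive.
Import GRing.Theory Num.Theory.
Local Open Scope ring_scope.

Definition Sh (n0 : nat) : 'M[int]_n0.+1 := \matrix_(l, j) ((l == ordS j)%:R).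

Lemma Sh_pow n0 i (l j : 'I_n0.+1) :
  (Sh n0 ^+ i) l j = ((l : nat) == (j + i) %% n0.+1)%N%:R.
Proof.
elim: i l j => [|i IH] l j.
  by rewrite expr0 !mxE addn0 modn_small // val_eqE.
rewrite exprSr mxE (bigD1 (ordS j)) //= big1 ?addr0.
  rewrite IH !mxE eqxx mulr1 /=; congr ((_ == _)%:R).
  by rewrite modnDml addSnnS.
move=> k hk; rewrite !mxE.
by move/negbTE: hk => ->; rewrite mulr0.
Qed.

Lemma Sh_n n0 : Sh n0 ^+ n0.+1 = 1.
Proof.
apply/matrixP => l j; rewrite Sh_pow !mxE modnDr modn_small // val_eqE.

Qed.

Definition dvm (d : int) m n (A : 'M[int]_(m, n)) := forall i j, (d %| A i j)%Z.

Lemma dvmD d m n (A B : 'M[int]_(m,n)) : dvm d A -> dvm d B -> dvm d (A + B).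
Proof. by move=> hA hB i j; rewrite mxE rpredD. Qed.
Lemma dvmN d m n (A : 'M[int]_(m,n)) : dvm d A -> dvm d (- A).
Proof. by move=> hA i j; rewrite mxE rpredN. Qed.
Lemma dvmB d m n (A B : 'M[int]_(m,n)) : dvm d A -> dvm d B -> dvm d (A - B).
Proof. by move=> hA hB; apply: dvmD => //; apply: dvmN. Qed.
Lemma dvm0 d m n : dvm d (0 : 'M[int]_(m,n)).
Proof. by move=> i j; rewrite mxE dvdz0. Qed.
Lemma dvm_mull d m n k (A : 'M[int]_(m,n)) (B : 'M[int]_(k,m)) :
  dvm d A -> dvm d (B *m A).
Proof. by move=> hA i j; rewrite mxE; apply: rpred_sum => l _; apply: dvdz_mull. Qed.
Lemma dvm_mulr d m n k (A : 'M[int]_(m,n)) (B : 'M[int]_(n,k)) :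
  dvm d A -> dvm d (A *m B).
Proof. by move=> hA i j; rewrite mxE; apply: rpred_sum => l _; apply: dvdz_mulr. Qed.
Lemma dvm_mul d1 d2 m n k (A : 'M[int]_(m,n)) (B : 'M[int]_(n,k)) :
  dvm d1 A -> dvm d2 B -> dvm (d1 * d2) (A *m B).
Proof. by move=> hA hB i j; rewrite mxE; apply: rpred_sum => l _; apply: dvdz_mul. Qed.
Lemma dvm_trans d d' m n (A : 'M[int]_(m,n)) : (d' %| d)%Z -> dvm d A -> dvm d' A.
Proof. by move=> h hA i j; apply: dvdz_trans h (hA i j). Qed.
Lemma dvm_scale c d m n (A : 'M[int]_(m,n)) : dvm d A -> dvm (c * d) (c *: A).
Proof. by move=> hA i j; rewrite mxE; apply: dvdz_mul. Qed.
Lemma dvm_scale0 c m n (A : 'M[int]_(m,n)) : dvm c (c *: A).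
Proof. by move=> i j; rewrite mxE; apply: dvdz_mulr. Qed.
Lemma dvm_cancel c d m n (A : 'M[int]_(m,n)) : c != 0 -> dvm (c * d) (c *: A) -> dvm d A.
Proof. by move=> hc hA i j; move: (hA i j); rewrite mxE dvdz_mul2l. Qed.

Lemma circulant d n0 (A : 'M[int]_n0.+1) :
  A * Sh n0 = Sh n0 * A -> (forall j, (d %| A ord0 j)%Z) -> dvm d A.
Proof.
move=> hc h0.
have key : forall i j, A (ordS i) (ordS j) = A i j.
  move=> i j.
  have e1 : (A * Sh n0) (ordS i) j = A (ordS i) (ordS j).
    rewrite -mulmxE mxE (bigD1 (ordS j)) //= big1 ?addr0.
      by rewrite !mxE eqxx mulr1.
    by move=> k hk; rewrite !mxE (negbTE hk) mulr0.
  have e2 : (Sh n0 * A) (ordS i) j = A i j.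
    rewrite -mulmxE mxE (bigD1 i) //= big1 ?addr0.
      by rewrite !mxE eqxx mul1r.
    move=> k hk; rewrite !mxE.
    suff -> : (ordS i == ordS k) = false by rewrite mul0r.
    by apply/negbTE; apply: contra hk => /eqP /ordS_inj ->.
  by rewrite -e1 hc e2.
suff H : forall t (ht : (t < n0.+1)%N) j, (d %| A (Ordinal ht) j)%Z.
  by move=> [t ht] j; apply: H.
elim=> [|t IH] ht j.
  by have -> : Ordinal ht = ord0 by apply: val_inj.
have ht' : (t < n0.+1)%N by apply: ltnW.
have -> : Ordinal ht = ordS (Ordinal ht').
  by apply: val_inj => /=; rewrite modn_small.
by rewrite -(ord_predK j) key IH.
Qed.

Definition J (d : int) n0 (f : {poly int}) := dvm d (horner_mx (Sh n0) f).
Definition wp : {poly int} := 1 + 'X.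
Definition EP (d : int) n0 (P : nat) := exists N, J d n0 (wp ^+ N * (wp ^+ P - 1)).

Lemma hmxC n0 (A : 'M[int]_n0.+1) (c : int) : horner_mx A c%:P = c%:M.
Proof. exact: horner_mx_C. Qed.
Lemma hmxX n0 (A : 'M[int]_n0.+1) : horner_mx A 'X = A.
Proof. exact: horner_mx_X. Qed.

Lemma hmxCM n0 (A : 'M[int]_n0.+1) (c : int) g : horner_mx A (c%:P * g) = c *: horner_mx A g.
Proof. rewrite rmorphM -mul_scalar_mx mulmxE; congr (_ * _); exact: horner_mx_C. Qed.

Lemma hmxXnM n0 (A : 'M[int]_n0.+1) n g :
  horner_mx A (('X ^+ n - 1) * g) = (A ^+ n - 1) * horner_mx A g.
Proof.
rewrite rmorphM rmorphB rmorph1 rmorphXn; congr ((_ ^+ _ - _) * _); exact: horner_mx_X.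
Qed.

Lemma J_add d n0 f g : J d n0 f -> J d n0 g -> J d n0 (f + g).
Proof. by rewrite /J rmorphD; apply: dvmD. Qed.
Lemma J_sub d n0 f g : J d n0 f -> J d n0 g -> J d n0 (f - g).
Proof. by rewrite /J rmorphB; apply: dvmB. Qed.
Lemma J_mulr d n0 f g : J d n0 f -> J d n0 (f * g).
Proof. by rewrite /J rmorphM -mulmxE; apply: dvm_mulr. Qed.
Lemma J_mull d n0 f g : J d n0 f -> J d n0 (g * f).
Proof. by rewrite /J rmorphM -mulmxE; apply: dvm_mull. Qed.
Lemma J_mul d1 d2 n0 f g : J d1 n0 f -> J d2 n0 g -> J (d1 * d2) n0 (f * g).
Proof. by rewrite /J rmorphM -mulmxE; apply: dvm_mul. Qed.
Lemma J_trans d d' n0 f : (d' %| d)%Z -> J d n0 f -> J d' n0 f.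
Proof. by move=> h; apply: dvm_trans. Qed.
Lemma J_C d n0 c g : (d %| c)%Z -> J d n0 (c%:P * g).
Proof.
move=> h; rewrite /J hmxCM => i j.
by rewrite mxE; apply: dvdz_mulr.
Qed.
Lemma J_Cs c d n0 g : J d n0 g -> J (c * d) n0 (c%:P * g).
Proof. by rewrite /J hmxCM; apply: dvm_scale. Qed.
Lemma J_cancel c d n0 f : c != 0 -> J (c * d) n0 (c%:P * f) -> J d n0 f.
Proof. by rewrite /J hmxCM; apply: dvm_cancel. Qed.
Lemma J_Xn d n0 g : J d n0 (('X ^+ n0.+1 - 1) * g).
Proof.
rewrite /J hmxXnM Sh_n subrr mul0r.
exact: dvm0.
Qed.
Lemma J_row0 d n0 f : (forall j, (d %| horner_mx (Sh n0) f ord0 j)%Z) -> J d n0 f.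
Proof.
apply: circulant.
have := comm_mx_horner f (erefl (Sh n0 *m Sh n0)).
by rewrite /comm_mx !mulmxE.
Qed.

Lemma EP0 d n0 : EP d n0 0.
Proof. by exists 0%N; rewrite expr0 subrr mulr0 /J rmorph0; apply: dvm0. Qed.

Lemma EP_trans d d' n0 P : (d' %| d)%Z -> EP d n0 P -> EP d' n0 P.
Proof. by move=> h [N hN]; exists N; apply: J_trans hN. Qed.

Lemma EP_add d n0 a b : EP d n0 a -> EP d n0 b -> EP d n0 (a + b).
Proof.
move=> [N1 h1] [N2 h2]; exists (N1 + N2)%N.
have -> : wp ^+ (N1 + N2) * (wp ^+ (a + b) - 1) =
  (wp ^+ N1 * (wp ^+ a - 1)) * wp ^+ (N2 + b) + (wp ^+ N2 * (wp ^+ b - 1)) * wp ^+ N1.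
  rewrite !exprD; ring.
by apply: J_add; apply: J_mulr.
Qed.

Lemma EP_sub d n0 a b : (a <= b)%N -> EP d n0 a -> EP d n0 b -> EP d n0 (b - a).
Proof.
move=> hab [N1 h1] [N2 h2]; exists (N1 + N2 + a)%N.
have -> : wp ^+ (N1 + N2 + a) * (wp ^+ (b - a) - 1) =
  wp ^+ N1 * (wp ^+ N2 * (wp ^+ b - 1)) - wp ^+ N2 * (wp ^+ N1 * (wp ^+ a - 1)).
  rewrite -{2}(subnKC hab) !exprD; ring.
by apply: J_sub; apply: J_mull.
Qed.

Lemma EP_mul d n0 a c : EP d n0 a -> EP d n0 (a * c).
Proof.
move=> h; elim: c => [|c IH]; first by rewrite muln0; apply: EP0.
by rewrite mulnS; apply: EP_add.
Qed.

Lemma EP_dvd d n0 a b : EP d n0 a -> (a %| b)%N -> EP d n0 b.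
Proof. by move=> h /dvdnP [c ->]; rewrite mulnC; apply: EP_mul. Qed.

Lemma EP_mod d n0 a b : EP d n0 a -> EP d n0 b -> EP d n0 (b %% a).
Proof.
move=> ha hb.
have e : (b %% a = b - b %/ a * a)%N by rewrite {2}(divn_eq b a) addnC addnK.
rewrite e; apply: EP_sub => //; first by rewrite leq_divM.
by rewrite mulnC; apply: EP_mul.
Qed.

Lemma EP_gcd d n0 a b : EP d n0 a -> EP d n0 b -> EP d n0 (gcdn a b).
Proof.
elim: a {-2}a (leqnn a) b => [|m IH] a ha b hA hB.
  by move: ha; rewrite leqn0 => /eqP ->; rewrite gcd0n.
case: (posnP a) => [a0|apos].
  by rewrite a0 gcd0n.
rewrite -gcdn_modr gcdnC; apply: IH.
- by rewrite -ltnS; apply: leq_trans ha; apply: ltn_pmod.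
- exact: EP_mod.
- exact: hA.
Qed.

Lemma ex_min (P : nat -> Prop) : (exists n, P n) -> exists n, P n /\ forall m, P m -> (n <= m)%N.
Proof.
move=> [n hn]; elim: n {-2}n (leqnn n) hn => [|k IH] n hk hn.
  by exists n; split => // m _; move: hk; rewrite leqn0 => /eqP ->.
case: (classic (exists m, P m /\ (m < n)%N)) => [[m [hm hmn]]|hno].
  by apply: (IH m) => //; rewrite -ltnS; apply: leq_trans hmn hk.
exists n; split => // m hm; rewrite leqNgt; apply/negP => hlt; apply: hno.
by exists m.
Qed.

Lemma EP_min_dvd d n0 L x : (0 < L)%N -> EP d n0 L ->
  (forall P, (0 < P)%N -> EP d n0 P -> (L <= P)%N) -> EP d n0 x -> (L %| x)%N.
Proof.
move=> L0 hL hmin hx.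
have hg := EP_gcd hL hx.
have g0 : (0 < gcdn L x)%N by rewrite gcdn_gt0 L0.
have := hmin _ g0 hg => hle.
have : gcdn L x = L by apply/eqP; rewrite eqn_leq hle andbT dvdn_leq // dvdn_gcdl.
by move/eqP; rewrite -/(dvdn L x) => /eqP <-; rewrite dvdn_gcdr.
Qed.

Lemma TmapE m n (a : vecZ m n) i : (0 < m)%N ->
  (Tmap a i : nat) = ((a i + a (nexti i)) %% m)%N.
Proof. by case: m a => [//|m] a _ /=; rewrite ffunE. Qed.

Definition hat m n0 (a : vecZ m n0.+1) : 'rV[int]_n0.+1 := \row_i ((a i : nat)%:Z).
Definition Wm n0 : 'M[int]_n0.+1 := 1 + Sh n0.

Lemma hmx_wpX n0 k : horner_mx (Sh n0) (wp ^+ k) = Wm n0 ^+ k.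
Proof.
rewrite rmorphXn /wp rmorphD rmorph1 /Wm; congr ((1 + _) ^+ _); exact: horner_mx_X.
Qed.

Lemma rowSh n0 (v : 'rV[int]_n0.+1) i : (v *m Sh n0) ord0 i = v ord0 (ordS i).
Proof.
rewrite mxE (bigD1 (ordS i)) //= big1 ?addr0; first by rewrite !mxE eqxx mulr1.
by move=> k hk; rewrite !mxE (negbTE hk) mulr0.
Qed.

Lemma iterT m n0 (a : vecZ m n0.+1) k i : (0 < m)%N ->
  (((iter k (@Tmap m n0.+1) a) i : nat)%:Z = (hat a *m Wm n0 ^+ k) ord0 i %[mod m])%Z.
Proof.
move=> m0; elim: k i => [|k IH] i.
  by rewrite expr0 mulmx1 mxE.
rewrite iterS TmapE // -modz_nat PoszD modz_mod.
rewrite exprSr mulmxA /Wm mulmxDr mulmx1 mxE rowSh.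
by rewrite -modzDm IH IH modzDm.
Qed.

Lemma hmx_EP n0 N P :
  horner_mx (Sh n0) (wp ^+ N * (wp ^+ P - 1)) = Wm n0 ^+ N * (Wm n0 ^+ P - 1).
Proof. rewrite rmorphM rmorphB rmorph1; congr (_ * (_ - _)); exact: hmx_wpX. Qed.

Lemma WmC n0 a b : Wm n0 ^+ a * Wm n0 ^+ b = Wm n0 ^+ b * Wm n0 ^+ a.
Proof. by rewrite -!exprD addnC. Qed.

Lemma row_dvm (d : int) n0 (u : 'rV[int]_n0.+1) :
  (forall i, (d %| u ord0 i)%Z) -> dvm d u.
Proof. by move=> h i j; rewrite (ord1 i). Qed.

Lemma evp_iff m n0 (a : vecZ m n0.+1) P : (0 < m)%N ->
  is_eventual_period a P <->
  exists N, forall i, (m %| (hat a *m (Wm n0 ^+ N * (Wm n0 ^+ P - 1))) ord0 i)%Z.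
Proof.
move=> m0; split.
  move=> [N hN]; exists N => i.
  have e := hN N (leqnn N).
  have h1 := iterT a (N + P) i m0; have h2 := iterT a N i m0.
  rewrite e in h1.
  rewrite mulrBr mulr1 -exprD mulmxBr mxE [X in _ + X]mxE.
  by rewrite -eqz_mod_dvd -h1 h2.
move=> [N hN]; exists N => k hk.
apply/ffunP => i; apply: val_inj.
have h1 := iterT a (k + P) i m0; have h2 := iterT a k i m0.
have hd : (m %| (hat a *m (Wm n0 ^+ k * (Wm n0 ^+ P - 1))) ord0 i)%Z.
  have [dd ek] : exists dd, k = (N + dd)%N by exists (k - N)%N; rewrite subnKC.
  have -> : Wm n0 ^+ k * (Wm n0 ^+ P - 1) =
      (Wm n0 ^+ N * (Wm n0 ^+ P - 1)) * Wm n0 ^+ dd.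
    rewrite ek !mulrBr !mulrBl !mulr1 -!exprD; congr (_ ^+ _ - _ ^+ _); lia.
  rewrite -mulmxE mulmxA; exact: (dvm_mulr (Wm n0 ^+ dd) (row_dvm hN)).  
move: hd; rewrite mulrBr mulr1 -exprD mulmxBr mxE [X in _ + X]mxE.
rewrite -eqz_mod_dvd => /eqP; rewrite -h1 -h2 !modz_nat => -[].
by rewrite !modn_small.
Qed.

Lemma EP_all m n0 P : (0 < m)%N -> EP m n0 P ->
  forall a : vecZ m n0.+1, is_eventual_period a P.
Proof.
move=> m0 [N hN] a; apply/(evp_iff _ _ m0); exists N => i.
rewrite -hmx_EP; exact: (dvm_mull (hat a) hN).
Qed.

Definition delta0 m n0 (hm : (1 < m)%N) : vecZ m n0.+1 :=
  [ffun i => if i == ord0 then Ordinal hm else Ordinal (ltnW hm)].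

Lemma hat_delta m n0 (hm : (1 < m)%N) (A : 'M[int]_n0.+1) j :
  (hat (delta0 n0 hm) *m A) ord0 j = A ord0 j.
Proof.
rewrite mxE (bigD1 ord0) //= big1 ?addr0; first by rewrite !mxE ffunE eqxx mul1r.
by move=> k hk; rewrite !mxE ffunE (negbTE hk) mul0r.
Qed.

Lemma EP_delta m n0 (hm : (1 < m)%N) P :
  is_eventual_period (delta0 n0 hm) P -> EP m n0 P.
Proof.
move=> /(evp_iff _ _ (ltnW hm)) [N hN]; exists N; apply: J_row0 => j.
by have := hN j; rewrite hat_delta hmx_EP.
Qed.
Lemma geom_id (R : comPzRingType) (v : R) m :
  exists H, v ^+ m - 1 = (v - 1) * (m%:R + (v - 1) * H).
Proof.
elim: m => [|m [H IH]]; first by exists 0; rewrite expr0 subrr mulr0 addr0 mulr0.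
exists (m%:R + v * H).
have -> : v ^+ m.+1 - 1 = v * (v ^+ m - 1) + (v - 1) by rewrite exprS; ring.
rewrite IH -addn1 natrD; ring.
Qed.

Lemma exp3 (R : comPzRingType) (y : R) m :
  exists K, (1 + y) ^+ m = 1 + m%:R * y + ('C(m, 2))%:R * y ^+ 2 + y ^+ 3 * K.
Proof.
elim: m => [|m [K IH]]; first by exists 0; rewrite expr0 bin0n /=; ring.
exists ('C(m, 2)%:R + K * (1 + y)).
rewrite exprSr IH binS bin1 -addn1 !natrD; ring.
Qed.

Lemma exp2c (R : comPzRingType) (c y : R) m :
  exists K, (c + y) ^+ m.+1 = c ^+ m.+1 + (m.+1)%:R * c ^+ m * y + y ^+ 2 * K.
Proof.
elim: m => [|m [K IH]]; first by exists 0; rewrite !expr1 expr0; ring.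
exists (m.+1%:R * c ^+ m + K * (c + y)).
have e : (m.+2)%:R = (m.+1)%:R + 1 :> R by rewrite -addn1 natrD.
rewrite exprSr IH e !exprS; ring.
Qed.

Lemma powcong (R : comPzRingType) (A B d : R) m :
  exists h, (A + d * B) ^+ m = A ^+ m + d * h.
Proof.
elim: m => [|m [h IH]]; first by exists 0; rewrite !expr0; ring.
exists (h * (A + d * B) + A ^+ m * B).
rewrite exprSr IH exprSr; ring.
Qed.

Lemma frob1 (R : comPzRingType) p (x : R) : prime p ->
  exists h, (x + 1) ^+ p = x ^+ p + 1 + p%:R * h.
Proof.
move=> pp; have p0 := prime_gt0 pp.
case: p pp p0 => [//|p] pp _.
exists (\sum_(i < p) x ^+ i.+1 *+ ('C(p.+1, i.+1) %/ p.+1)).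
rewrite exprD1n big_ord_recr /= big_ord_recl /= binn bin0 expr0 mulr1n.
rewrite mulr1n.
suff -> : \sum_(i < p) x ^+ bump 0 i *+ 'C(p.+1, bump 0 i) =
  p.+1%:R * \sum_(i < p) x ^+ i.+1 *+ ('C(p.+1, i.+1) %/ p.+1) by ring.
rewrite mulr_sumr; apply: eq_bigr => i _.
rewrite /bump /= add1n mulr_natl -mulrnA.
rewrite divnK //; apply: prime_dvd_bin => //.
by rewrite /= ltnS ltn_ord.
Qed.

Lemma frobj (R : comPzRingType) p (x : R) j : prime p ->
  exists h, (x + 1) ^+ (p ^ j) = x ^+ (p ^ j) + 1 + p%:R * h.
Proof.
move=> pp; elim: j => [|j [h IH]]; first by exists 0; rewrite expn0 !expr1 mulr0 addr0.
rewrite expnSr !exprM IH.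
have [h1 e1] := powcong (x ^+ (p ^ j) + 1) h p%:R p.
have [h2 e2] := frob1 (x ^+ (p ^ j)) pp.
by exists (h2 + h1); rewrite e1 e2; ring.
Qed.

Lemma hmxN n0 (A : 'M[int]_n0.+1) (k : nat) g :
  horner_mx A (k%:R * g) = (k : int) *: horner_mx A g.
Proof. by rewrite rmorphM rmorphMn rmorph1 mulr_natl -scaler_nat natz. Qed.

Lemma J_nats (k : nat) d n0 g : J d n0 g -> J (k%:Z * d) n0 (k%:R * g).
Proof. by rewrite /J hmxN; apply: dvm_scale. Qed.
Lemma J_nat (k : nat) n0 g : J k%:Z n0 (k%:R * g).
Proof. by rewrite /J hmxN; apply: dvm_scale0. Qed.

Lemma dvdz_nat (a b : nat) : (a %| b)%N -> (a%:Z %| b%:Z)%Z.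
Proof. by rewrite dvdzE. Qed.

Lemma EP_lift (q : nat) j n0 P : (0 < j)%N -> (1 < q)%N ->
  EP (q ^ j)%N n0 P -> EP (q ^ j.+1)%N n0 (P * q).
Proof.
move=> j0 q1 [N hN].
have [q2 eq] : exists q2, q = q2.+2 by exists (q - 2)%N; lia.
subst q.
have [H eH] := geom_id (wp ^+ P) q2.+2.
exists (N * q2.+2)%N.
have -> : wp ^+ (N * q2.+2) * (wp ^+ (P * q2.+2) - 1) =
  q2.+2%:R * (wp ^+ N ^+ q2.+1 * (wp ^+ N * (wp ^+ P - 1))) +
  (wp ^+ N * (wp ^+ P - 1)) ^+ 2 * (wp ^+ N ^+ q2 * H).
  rewrite !exprM eH !exprS; ring.
apply: J_add.
  by rewrite expnS PoszM; apply: J_nats; apply: J_mull.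
apply: J_mulr; apply: (@J_trans ((q2.+2 ^ j)%N%:Z * (q2.+2 ^ j)%N%:Z)).
  by rewrite -PoszM -expnD; apply: dvdz_nat; apply: dvdn_exp2l; lia.
by rewrite expr2; apply: J_mul.
Qed.

Lemma EP_liftk p n0 Q : prime p -> EP p n0 Q -> forall k, EP (p ^ k.+1)%N n0 (Q * p ^ k).
Proof.
move=> pp hQ; elim=> [|k IH]; first by rewrite expn0 muln1 expn1.
have -> : (Q * p ^ k.+1 = Q * p ^ k * p)%N by rewrite expnSr mulnA.
apply: EP_lift => //; exact: prime_gt1.
Qed.

Lemma EP_frob p n0 s f : prime p -> (0 < f)%N -> (n0.+1 %| p ^ s * (p ^ f - 1))%N ->
  EP p n0 (p ^ s * (p ^ f - 1)).
Proof.
move=> pp f0 /dvdnP [c ec].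
have [h1 e1] := frobj ('X : {poly int}) s pp.
have [h2 e2] := frobj ('X : {poly int}) (s + f) pp.
have [G eG] := geom_id ('X ^+ n0.+1 : {poly int}) c.
exists (p ^ s)%N.
have pf : (1 <= p ^ f)%N by rewrite expn_gt0 prime_gt0.
have eS : (p ^ (s + f) = p ^ s * (p ^ f - 1) + p ^ s)%N.
  rewrite expnD mulnBr muln1 subnK //.
  by rewrite -{1}(muln1 (p ^ s)%N) leq_mul2l pf orbT.
have -> : wp ^+ (p ^ s) * (wp ^+ (p ^ s * (p ^ f - 1)) - 1) =
    wp ^+ (p ^ (s + f)) - wp ^+ (p ^ s).
  by rewrite mulrBr mulr1 -exprD eS addnC.
rewrite /wp [1 + _]addrC e1 e2 eS exprD ec mulnC exprM.
have eX : ('X ^+ n0.+1) ^+ c = ('X ^+ n0.+1 - 1) * (c%:R + ('X ^+ n0.+1 - 1) * G) + 1 :> {poly int}.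
  by rewrite -eG subrK.
rewrite eX.
set Y := 'X^(n0.+1) - 1; set Z := 'X^(p ^ s).
have -> : (Y * (c%:R + Y * G) + 1) * Z + 1 + p%:R * h2 - (Z + 1 + p%:R * h1) =
   Y * ((c%:R + Y * G) * Z) + p%:R * (h2 - h1) by ring.
by apply: J_add; [apply: J_Xn | apply: J_nat].
Qed.

Definition Fold n0 r0 : 'M[int]_(n0.+1, r0.+1) :=
  \matrix_(i, l) ((i %% r0.+1)%N == l)%:R.

Lemma Sh_Fold n0 r0 : (r0.+1 %| n0.+1)%N -> Sh n0 *m Fold n0 r0 = Fold n0 r0 *m Sh r0.
Proof.
move=> hd; apply/matrixP => i l; rewrite !mxE.
rewrite (bigD1 (ord_pred i)) //= big1 ?addr0; last first.
  move=> k hk; rewrite !mxE.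
  suff -> : (i == ordS k) = false by rewrite mul0r.
  apply/negbTE; apply: contra hk => /eqP ->; by rewrite ordSK.
rewrite (bigD1 (Ordinal (ltn_pmod i (ltn0Sn r0)))) //= big1 ?addr0; last first.
  move=> k hk; rewrite !mxE.
  suff -> : ((i %% r0.+1)%N == k) = false by rewrite mul0r.
  by apply/negbTE; apply: contra hk => /eqP e; apply/eqP; apply: val_inj; rewrite /= e.
rewrite !mxE ord_predK eqxx mul1r /= eqxx mul1r; congr (_%:R).
rewrite (modn_dvdm _ hd).
have hn : (n0.+1 %% r0.+1 = 0)%N by apply/eqP.
set x := (i + n0.+1).-1.
have -> : (x %% r0.+1 == l)%N = (x %% r0.+1 == l %% r0.+1)%N by rewrite (modn_small (ltn_ord l)).
rewrite -(eqn_modDr 1%N) /x (addn1 ((i + n0.+1).-1)) prednK ?addn_gt0 ?orbT //.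
rewrite -modnDmr hn addn0 addn1.
by rewrite -val_eqE.
Qed.

Lemma WX_Fold n0 r0 k : (r0.+1 %| n0.+1)%N ->
  Wm n0 ^+ k *m Fold n0 r0 = Fold n0 r0 *m Wm r0 ^+ k.
Proof.
move=> hd.
have hW : Wm n0 *m Fold n0 r0 = Fold n0 r0 *m Wm r0.
  by rewrite /Wm mulmxDl mulmxDr Sh_Fold // -!scalar_mxC.
elim: k => [|k IH]; first by rewrite !expr0 mul1mx mulmx1.
by rewrite !exprSr -!mulmxE -mulmxA hW mulmxA IH mulmxA.
Qed.

Lemma EP_fold d n0 r0 L : (r0.+1 %| n0.+1)%N -> EP d n0 L -> EP d r0 L.
Proof.
move=> hd [N hN]; exists N; move: hN; rewrite /J !hmx_EP !mulrBr !mulr1 -!exprD => hN i j.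
have hle : (r0.+1 <= n0.+1)%N by apply: dvdn_leq.
have e : ((Wm n0 ^+ (N + L) - Wm n0 ^+ N) *m Fold n0 r0) (widen_ord hle i) j =
         (Wm r0 ^+ (N + L) - Wm r0 ^+ N) i j.
  rewrite mulmxBl !WX_Fold // -mulmxBr mxE (bigD1 i) //= big1 ?addr0.
    by rewrite !mxE /= modn_small // eqxx mul1r.
  move=> k hk; rewrite !mxE /= modn_small //.
  by rewrite (_ : (i == k :> nat) = false) ?mul0r //; apply/negbTE; rewrite val_eqE eq_sym.
rewrite -e; exact: (dvm_mulr (Fold n0 r0) hN).
Qed.

Lemma bin_ppow_dvd p s i : prime p -> (0 < i < p ^ s)%N -> (p %| 'C(p ^ s, i))%N.
Proof.
move=> pp /andP [i0 ilt].
have e := mul_bin_diag (p ^ s) i.-1; rewrite prednK // in e.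
apply/negPn/negP => hnd.
have cop : coprime (p ^ s) 'C(p ^ s, i) by apply: coprimeXl; rewrite prime_coprime.
have : (p ^ s %| i * 'C(p ^ s, i))%N by rewrite -e dvdn_mulr.
rewrite Gauss_dvdl // => /dvdn_leq => /(_ i0); lia.
Qed.

Lemma bin_m1 p s j : prime p -> (j < p ^ s)%N -> ~~ (p %| 'C((p ^ s).-1, j))%N.
Proof.
move=> pp; elim: j => [|j IH] hj; first by rewrite bin0 dvdn1; apply/eqP => e; move: (prime_gt1 pp); rewrite e. 
have ps : (0 < p ^ s)%N by rewrite expn_gt0 prime_gt0.
have hd := @bin_ppow_dvd p s j.+1 pp; rewrite hj andTb in hd; have {}hd := hd isT.
apply/negP => hj1.
rewrite -{1}(prednK ps) binS (dvdn_addr _ hj1) in hd.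
by move: (IH (ltnW hj)); rewrite hd.
Qed.

Lemma bin_top p s : prime p -> (0 < s)%N ->
  'C(p ^ s, p ^ s.-1) = (p * 'C((p ^ s).-1, (p ^ s.-1).-1))%N.
Proof.
move=> pp s0.
have q0 : (0 < p ^ s.-1)%N by rewrite expn_gt0 prime_gt0.
have e := mul_bin_diag (p ^ s) (p ^ s.-1).-1; rewrite prednK // in e.
have es : (p ^ s = p ^ s.-1 * p)%N by rewrite -expnSr prednK.
apply/eqP; rewrite -(eqn_pmul2l q0) -e {1}es mulnA //.
Qed.

Lemma binom_split (R : comPzRingType) (x : R) n0 p :
  (forall i, (0 < i < n0.+1)%N -> (p %| 'C(n0.+1, i))%N) ->
  (x + 1) ^+ n0.+1 = x ^+ n0.+1 + 1 +
     p%:R * \sum_(i < n0) x ^+ i.+1 *+ ('C(n0.+1, i.+1) %/ p).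
Proof.
move=> hdv.
rewrite exprD1n big_ord_recr /= big_ord_recl /= binn bin0 expr0 mulr1n.
rewrite mulr1n.
suff -> : \sum_(i < n0) x ^+ bump 0 i *+ 'C(n0.+1, bump 0 i) =
  p%:R * \sum_(i < n0) x ^+ i.+1 *+ ('C(n0.+1, i.+1) %/ p) by ring.
rewrite mulr_sumr; apply: eq_bigr => i _.
rewrite /bump /= add1n mulr_natl -mulrnA.
rewrite divnK //; apply: hdv.
by rewrite /= ltnS ltn_ord.
Qed.

Definition s2p p r0 : {poly int} := \sum_(i < r0) 'X ^+ i.+1 *+ ('C(r0.+1, i.+1) %/ p).

Lemma hmx_s2 r0 p (A : 'M[int]_r0.+1) :
  horner_mx A (s2p p r0) = \sum_(i < r0) A ^+ i.+1 *+ ('C(r0.+1, i.+1) %/ p).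
Proof.
rewrite rmorph_sum; apply: eq_bigr => i _; rewrite rmorphMn rmorphXn.
congr (_ ^+ _ *+ _); exact: horner_mx_X.
Qed.

Lemma s2_entry p r0 (t : 'I_r0.+1) : (0 < t)%N ->
  horner_mx (Sh r0) (s2p p r0) t ord0 = ('C(r0.+1, t) %/ p)%N%:Z.
Proof.
move=> t0; rewrite hmx_s2 summxE.
have tl : (t.-1 < r0)%N by rewrite -ltnS prednK.
rewrite (bigD1 (Ordinal tl)) //= big1 ?addr0.
  by rewrite mulmxnE Sh_pow /= add0n prednK // modn_small // eqxx mulr1n natz.
move=> i hi; rewrite mulmxnE Sh_pow /= add0n modn_small; last by rewrite ltnS.
suff -> : (t == i.+1 :> nat) = false by rewrite mul0rn.
apply/negbTE; apply: contra hi => /eqP e; apply/eqP; apply: val_inj => /=.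
by rewrite e.
Qed.

Lemma wp_r p s r0 : prime p -> r0.+1 = (p ^ s)%N ->
  wp ^+ r0.+1 = 2%:R + p%:R * s2p p r0 + ('X ^+ r0.+1 - 1).
Proof.
move=> pp hr; rewrite /wp addrC (@binom_split _ _ r0 p) /s2p; first ring.
by move=> i hi; rewrite hr; apply: bin_ppow_dvd => //; rewrite -hr.
Qed.

Lemma wp_M p s r0 (q : nat) : prime p -> (2 < p)%N -> r0.+1 = (p ^ s)%N ->
  (2 ^ p.-1 = 1 + p * q)%N ->
  exists c h K, wp ^+ (r0.+1 * p.-1) = 1 + p%:R * c + ('X ^+ r0.+1 - 1) * h /\
    c = q%:R + (p.-1 * 2 ^ p.-2)%N%:R * s2p p r0 + p%:R * K.
Proof.
move=> pp p2 hr hq.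
have [m em] : exists m, p = m.+2 by exists (p - 2)%N; lia.
have e1 : p.-1 = m.+1 by rewrite em.
have e2 : p.-2 = m by rewrite em.
rewrite e1 /=; rewrite e1 in hq.
have [h eh] := powcong (2%:R + p%:R * s2p p r0) 1 ('X ^+ r0.+1 - 1) m.+1.
have [K eK] := exp2c (2%:R : {poly int}) (p%:R * s2p p r0) m.
exists (q%:R + (m.+1 * 2 ^ m)%N%:R * s2p p r0 + p%:R * (s2p p r0 ^+ 2 * K)), h,
  (s2p p r0 ^+ 2 * K).
split => //.
rewrite exprM (wp_r pp hr) -[X in _ + X](mulr1) eh eK.
rewrite -natrX hq natrD natrM natrM natrX; ring.
Qed.

Lemma lift_c p r0 (M : nat) (c h0 : {poly int}) : prime p -> odd p ->
  wp ^+ M = 1 + p%:R * c + ('X ^+ r0.+1 - 1) * h0 ->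
  forall j, exists cj hj e, wp ^+ (M * p ^ j) = 1 + (p ^ j.+1)%N%:R * cj + ('X ^+ r0.+1 - 1) * hj
     /\ cj = c + p%:R * e.
Proof.
move=> pp podd hM; elim=> [|j [cj [hj [e [Ij Ej]]]]].
  by exists c, h0, 0; rewrite expn0 muln1 expn1 hM mulr0 addr0.
set P : {poly int} := p%:R.
set Y : {poly int} := 'X ^+ r0.+1 - 1.
have [h' eh] := powcong (1 + (p ^ j.+1)%N%:R * cj) hj Y p.
have [K eK] := exp3 ((p ^ j.+1)%N%:R * cj) p.
set h2 := (p.-1)./2.
exists (cj + P * (h2%:R * P ^+ j * cj ^+ 2 + P ^+ j * P ^+ j * cj ^+ 3 * K)), h',
   (e + (h2%:R * P ^+ j * cj ^+ 2 + P ^+ j * P ^+ j * cj ^+ 3 * K)).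
split; last by rewrite Ej; ring.
rewrite expnSr mulnA exprM Ij eh eK bin2odd // natrM -/h2.
rewrite !natrX -/P !exprS; ring.
Qed.

Lemma dvd_drop p e u x : prime p -> coprime p u -> (0 < x)%N ->
  (x %| p ^ e.+1 * u)%N -> ~~ (p ^ e.+1 %| x)%N -> (x %| p ^ e * u)%N.
Proof.
move=> pp cu x0 /dvdnP [y ey] hn.
case: (boolP (p %| y)%N) => [/dvdnP [y' ey'] | py].
  apply/dvdnP; exists y'.
  have p0 : (0 < p)%N by apply: prime_gt0.
  apply/eqP; rewrite -(eqn_pmul2r p0); apply/eqP.
  have -> : (p ^ e * u * p = p ^ e.+1 * u)%N by rewrite expnSr mulnAC.
  by rewrite ey ey' mulnAC.
exfalso; move/negP: hn; apply.
have cy : coprime (p ^ e.+1) y by apply: coprimeXl; rewrite prime_coprime.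
by rewrite -(Gauss_dvdr _ cy) -ey dvdn_mulr.
Qed.

Lemma J_natcancel (k : nat) d n0 g : (0 < k)%N -> J (k%:Z * d) n0 (k%:R * g) -> J d n0 g.
Proof. by move=> k0; rewrite /J hmxN; apply: dvm_cancel; rewrite eqz_nat -lt0n. Qed.

Lemma hmx_qk n0 (A : 'M[int]_n0.+1) (a b : nat) g :
  horner_mx A (a%:R + b%:R * g) = a%:R + (b : int) *: horner_mx A g.
Proof. by rewrite rmorphD; congr (_ + _); [rewrite rmorphMn rmorph1 | exact: hmxN]. Qed.

Lemma one_entry n0 (q : nat) (i j : 'I_n0.+1) :
  (q%:R : 'M[int]_n0.+1) i j = (q * (i == j))%N%:Z.
Proof. by rewrite mulmxnE !mxE; case: (i == j); rewrite /= ?muln1 ?muln0 ?mul0rn // natz. Qed.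

Lemma key p s r0 j L : prime p -> (2 < p)%N -> r0.+1 = (p ^ s)%N -> ~ wieferich p ->
  EP (p ^ j.+2)%N r0 L -> (p ^ (s + j.+1) %| L)%N.
Proof.
move=> pp p2 hr nw hL.
have podd : odd p by case: (even_prime pp) => // e; rewrite e in p2.
have p0 := prime_gt0 pp.
have hf : (2 ^ p.-1 = 1 %[mod p])%N.
  rewrite -(totient_prime pp); apply: Euler_exp_totient.
  by rewrite prime_coprime // dvdn2 podd.
have h1 : (1 <= 2 ^ p.-1)%N by rewrite expn_gt0.
have hd : (p %| 2 ^ p.-1 - 1)%N by rewrite -eqn_mod_dvd // hf.
set q := ((2 ^ p.-1 - 1) %/ p)%N.
have hq : (2 ^ p.-1 = 1 + p * q)%N by rewrite /q mulnC divnK // subnKC.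
have nq : ~~ (p %| q)%N.
  apply/negP => /dvdnP [z ez]; apply: nw; split => //.
  rewrite hq ez (_ : (1 + p * (z * p) = z * p ^ 2 + 1)%N); last by rewrite addnC mulnCA mulnn.
  by rewrite modnMDl.
have [c [h [K [hM eqc]]]] := wp_M pp p2 hr hq.
set M := (r0.+1 * p.-1)%N.
have hlift := lift_c pp podd hM.
have M0 : (0 < M * p ^ j.+1)%N by rewrite !muln_gt0 expn_gt0 p0 /= -ltnS prednK // ltnW.
have hEP1 : EP (p ^ j.+2)%N r0 (M * p ^ j.+1).
  have [c1 [h1' [e1 [I1 _]]]] := hlift j.+1.
  exists 0%N; rewrite expr0 mul1r I1.
  have -> : forall (a b : {poly int}), 1 + a + b - 1 = a + b by move=> *; ring.
  by apply: J_add; [apply: J_nat | apply: J_Xn].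
have [L0 [[L00 hL0] hmin]] :=
  ex_min (ex_intro (fun P => (0 < P)%N /\ EP (p ^ j.+2)%N r0 P) _ (conj M0 hEP1)).
have hmin' : forall P, (0 < P)%N -> EP (p ^ j.+2)%N r0 P -> (L0 <= P)%N.
  by move=> P P0 hP; apply: hmin.
have dL := EP_min_dvd L00 hL0 hmin' hL.
have dM := EP_min_dvd L00 hL0 hmin' hEP1.
apply/negPn/negP => hnd.
have hnd0 : ~~ (p ^ (s + j).+1 %| L0)%N.
  by rewrite -addnS; apply: contra hnd => h'; apply: dvdn_trans h' dL.
have eM : forall i, (M * p ^ i = p ^ (s + i) * p.-1)%N.
  by move=> i; rewrite /M hr mulnAC -expnD.
have cpu : coprime p p.-1.
  rewrite prime_coprime //; apply/negP => /dvdn_leq H.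
  have : (0 < p.-1)%N by rewrite -(ltn_add2r 1) !addn1 prednK // ltnW.
  by move/H; rewrite leqNgt ltn_predL p0.
have dM2 : (L0 %| p ^ (s + j) * p.-1)%N.
  by apply: (dvd_drop pp cpu L00) => //; rewrite -addnS -eM.
have hEP0 : EP (p ^ j.+2)%N r0 (M * p ^ j) by apply: EP_dvd hL0 _; rewrite eM.
have [cj [hj [ej [Ij Ej]]]] := hlift j.
case: hEP0 => N hN.
set Y : {poly int} := 'X ^+ r0.+1 - 1.
have hN' : J (p ^ j.+2)%N r0 ((p ^ j.+1)%N%:R * (wp ^+ N * cj)).
  have -> : (p ^ j.+1)%N%:R * (wp ^+ N * cj) =
     wp ^+ N * (wp ^+ (M * p ^ j) - 1) - Y * (wp ^+ N * hj) by rewrite Ij /Y; ring.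
  by apply: J_sub hN _; apply: J_Xn.
have hN2 : J p r0 (wp ^+ N * cj).
  apply: (@J_natcancel (p ^ j.+1)); first by rewrite expn_gt0 p0.
  by rewrite -PoszM -expnSr.
have [g1 eg1] := powcong (1 + p%:R * c) h Y N.
have [g2 eg2] := powcong (1 : {poly int}) c p%:R N.
have hcj : J p r0 cj.
  have NM : (N <= M * N)%N by apply: leq_pmull; rewrite muln_gt0 /= -ltnS prednK // ltnW.
  have := J_mull (wp ^+ (M * N - N)) hN2.
  rewrite mulrA -exprD subnK // exprM hM -/Y eg1 eg2 expr1n => H.
  have -> : cj = (1 + p%:R * g2 + Y * g1) * cj - p%:R * (g2 * cj) - Y * (g1 * cj) by ring.
  by apply: J_sub; [apply: J_sub H _; apply: J_nat | apply: J_Xn].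
have hc : J p r0 c.
  rewrite Ej in hcj.
  have -> : c = (c + p%:R * ej) - p%:R * ej by ring.
  by apply: J_sub hcj _; apply: J_nat.
have hqk : J p r0 (q%:R + (p.-1 * 2 ^ p.-2)%N%:R * s2p p r0).
  rewrite eqc in hc.
  have -> : q%:R + (p.-1 * 2 ^ p.-2)%N%:R * s2p p r0 =
     (q%:R + (p.-1 * 2 ^ p.-2)%N%:R * s2p p r0 + p%:R * K) - p%:R * K by ring.
  by apply: J_sub hc _; apply: J_nat.
move: hqk; rewrite /J hmx_qk => hqk.
have k2nd : ~~ (p %| p.-1 * 2 ^ p.-2)%N.
  rewrite Euclid_dvdM // negb_or; apply/andP; split.
    by rewrite -prime_coprime // coprime_sym.
  rewrite Euclid_dvdX // negb_and; apply/orP; left.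
  by apply/negP => /dvdn_leq H; move: (H isT); rewrite leqNgt p2.
case: (posnP s) => [s0 | spos].
  have r00 : r0 = 0%N by move: hr; rewrite s0 expn0 => -[].
  subst r0.
  have e0 : s2p p 0 = 0 by rewrite /s2p big_ord0.
  move: (hqk ord0 ord0); rewrite e0 rmorph0 scaler0 addr0 one_entry eqxx muln1.
  by rewrite dvdzE /= (negbTE nq).
have ht : (p ^ s.-1 < r0.+1)%N by rewrite hr ltn_exp2l ?prime_gt1 // prednK ?ltnSn.
set t : 'I_r0.+1 := Ordinal ht.
have t0 : (0 < t)%N by rewrite /= expn_gt0 p0.
move: (hqk t ord0); rewrite mxE [X in _ + X]mxE one_entry s2_entry //.
have -> : (t == ord0) = false by apply/negbTE; rewrite -val_eqE /= -lt0n.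
rewrite muln0 add0r /= hr bin_top // mulKn // -PoszM dvdzE /= Euclid_dvdM // (negbTE k2nd) /=.
apply/negP; apply: bin_m1 => //.
by apply: leq_ltn_trans (leq_pred _) _; rewrite ltn_exp2l ?prime_gt1 // prednK ?ltnSn.
Qed.

Local Close Scope ring_scope.

Lemma cyc_exists m n0 (a : vecZ m n0.+1) P0 : 0 < P0 -> is_eventual_period a P0 ->
  exists L, is_cycle_length a L.
Proof.
move=> P00 hP0.
have [L [[L0 hL] hmin]] :=
  ex_min (ex_intro (fun P => 0 < P /\ is_eventual_period a P) _ (conj P00 hP0)).
by exists L; split => //; split => // P Ppos hP; apply: hmin.
Qed.

Theorem theorem5p10 (p : nat) :
  prime p -> 3 <= p -> ~ wieferich p ->
  forall k n : nat, 0 < k -> 0 < n ->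
  forall Q : nat, is_Pmax p n Q -> is_Pmax (p ^ k) n (p ^ k.-1 * Q).
Proof.
move=> pp p3 nw k n k0 n0pos Q [[a0 ha0] hmax].
case: n n0pos a0 ha0 hmax => [//|n0] _ a0 ha0 hmax.
have p0 := prime_gt0 pp; have p1 := prime_gt1 pp.
have [n' cn' en] := pfactor_coprime pp (ltn0Sn n0).
set s := logn p n0.+1 in en.
have n'0 : 0 < n' by move: (ltn0Sn n0); rewrite en muln_gt0 => /andP [].
set f := totient n'.
have f0 : 0 < f by rewrite totient_gt0.
have hE : p ^ f = 1 %[mod n'] by apply: Euler_exp_totient.
have pf1 : 1 < p ^ f by rewrite -{1}(expn0 p) ltn_exp2l.
set D := p ^ f - 1.
have D0 : 0 < D by rewrite subn_gt0.
have hnD : n' %| D by rewrite -eqn_mod_dvd ?hE // ltnW.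
have hnsD : n0.+1 %| p ^ s * D by rewrite en mulnC dvdn_mul.
have hF : EP p n0 (p ^ s * D) := EP_frob pp f0 hnsD.
have cpD : coprime p D.
  rewrite prime_coprime //; apply/negP => hpD.
  have pf : p %| p ^ f by rewrite -(prednK f0) expnS dvdn_mulr.
  have h1 : p %| p ^ f - D by apply: dvdn_sub.
  have e1 : p ^ f - D = 1 by rewrite /D subKn // ltnW.
  by move: h1; rewrite e1 dvdn1 => /eqP e; rewrite e in p1.
have sD0 : 0 < p ^ s * D by rewrite muln_gt0 expn_gt0 p0.
set dl := delta0 n0 p1.
have [C [C0 [hC hCmin]]] := cyc_exists sD0 (EP_all p0 hF dl).
have CQ : C <= Q by exact: (hmax dl C (conj C0 (conj hC hCmin))).
have hEPC : EP p n0 C := EP_delta hC.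
have QC : Q <= C.
  case: ha0 => Q0 [_ hmin0]; apply: hmin0 => //.
  exact: EP_all p0 hEPC a0.
have eQC : Q = C by apply/eqP; rewrite eqn_leq QC CQ.
subst C.
have hQmin : forall P, 0 < P -> EP p n0 P -> Q <= P.
  by move=> P P0 hP; apply: hCmin => //; apply: EP_all p0 hP dl.
have dQ : Q %| p ^ s * D := EP_min_dvd C0 hEPC hQmin hF.
have pk1 : 1 < p ^ k by rewrite -{1}(expn0 p) ltn_exp2l.
have pk0 : 0 < p ^ k by apply: ltnW.
have [k' ek] : exists k', k = k'.+1 by exists k.-1; rewrite prednK.
have hU : EP (p ^ k)%N n0 (Q * p ^ k.-1) by rewrite ek /=; apply: EP_liftk.
have U0 : 0 < Q * p ^ k.-1 by rewrite muln_gt0 C0 expn_gt0 p0.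
set dk := delta0 n0 pk1.
have [L [L0 [hLp hLmin]]] := cyc_exists U0 (EP_all pk0 hU dk).
have LU : L <= Q * p ^ k.-1 by apply: hLmin => //; apply: EP_all pk0 hU dk.
have hEPL : EP (p ^ k)%N n0 L := EP_delta hLp.
have hEPL1 : EP p n0 L.
  apply: EP_trans hEPL; apply: dvdz_nat; rewrite ek expnS dvdn_mulr //.
have dQL : Q %| L := EP_min_dvd C0 hEPC hQmin hEPL1.
have main : Q * p ^ k.-1 %| L.
  case: k' ek => [|j] ek; first by rewrite ek muln1.
  have p2 : 2 < p by [].
  have ps0 : 0 < p ^ s by rewrite expn_gt0 p0.
  have hr : ((p ^ s).-1).+1 = p ^ s by rewrite prednK.
  have hdv : ((p ^ s).-1).+1 %| n0.+1 by rewrite hr en dvdn_mull.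
  have hk := key pp p2 hr nw (EP_fold hdv (eq_ind _ (fun kk => EP (p ^ kk)%N n0 L) hEPL _ ek)).
  move: dQL => /dvdnP [x ex]; move: dQ => /dvdnP [y ey].
  have e : L * y = p ^ s * (x * D) by rewrite ex -mulnA (mulnC Q) -ey mulnCA.
  rewrite ex ek /= mulnC dvdn_pmul2r //.
  have h2 : p ^ s * p ^ j.+1 %| p ^ s * (x * D).
    by rewrite -expnD -e dvdn_mulr.
  rewrite dvdn_pmul2l // in h2.
  by rewrite -(Gauss_dvdl _ (coprimeXl _ cpD)).
have eL : L = Q * p ^ k.-1 by apply/eqP; rewrite eqn_leq LU dvdn_leq.
split.
  by exists dk; rewrite mulnC -eL.
move=> a P [P0 [hP hPmin]]; rewrite mulnC; apply: hPmin => //.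
exact: EP_all pk0 hU a.
Qed.
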